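(* Let $A,B$ be constant complex $(2\times2)$ matrices with $\operatorname{tr}A=0$ and $\det A\ge-\frac14$ (in particular $\det A$ is real). Let $y:(0,1]\to\mathbb{C}^2$ be a solution of $x\,y'(x)=(A+xB)y(x)$, $x\in(0,1]$. If $y\not\equiv0$, then there exists a constant $\varepsilon>0$ such that $|y(x)|\ge\varepsilon\sqrt{x}$ for all $x\in(0,1]$. *)

(* Defs.v *)
From Stdlib Require Import Reals.
From Coquelicot Require Import Coquelicot.
Open Scope R_scope.

Record mat2 := Mat2 { m11 : C; m12 : C; m21 : C; m22 : C }.

Definition vec2 := (C * C)%type.

Definition tr2 (M : mat2) : C := Cplus (m11 M) (m22 M).
Definition det2 (M : mat2) : C :=
  Cminus (Cmult (m11 M) (m22 M)) (Cmult (m12 M) (m21 M)).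

Definition mat2_add_scal (A : mat2) (t : R) (B : mat2) : mat2 :=
  Mat2 (Cplus (m11 A) (Cmult (RtoC t) (m11 B)))
       (Cplus (m12 A) (Cmult (RtoC t) (m12 B)))
       (Cplus (m21 A) (Cmult (RtoC t) (m21 B)))
       (Cplus (m22 A) (Cmult (RtoC t) (m22 B))).

Definition mulmv2 (M : mat2) (v : vec2) : vec2 :=
  (Cplus (Cmult (m11 M) (fst v)) (Cmult (m12 M) (snd v)),
   Cplus (Cmult (m21 M) (fst v)) (Cmult (m22 M) (snd v))).

Definition scalv2 (t : R) (v : vec2) : vec2 :=
  (Cmult (RtoC t) (fst v), Cmult (RtoC t) (snd v)).

Definition vnorm2 (v : vec2) : R :=
  sqrt (Cmod (fst v) ^ 2 + Cmod (snd v) ^ 2).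

Definition in01 (x : R) : Prop := 0 < x <= 1.

(* f : R -> C has derivative f' at every point of (0,1], the derivative
   being taken within the domain (0,1] (one-sided at x = 1). *)
Definition C_deriv_on01 (f f' : R -> C) : Prop :=
  forall x, in01 x ->
  forall eps, 0 < eps -> exists delta, 0 < delta /\
    forall h, h <> 0 -> in01 (x + h) -> Rabs h < delta ->
      Cmod (Cminus (Cdiv (Cminus (f (x + h)) (f x)) (RtoC h)) (f' x)) < eps.

Definition deriv_on01 (y y' : R -> vec2) : Prop :=
  C_deriv_on01 (fun x => fst (y x)) (fun x => fst (y' x)) /\
  C_deriv_on01 (fun x => snd (y x)) (fun x => snd (y' x)).

(* Main.v *)
Require Import Defs.
From Stdlib Require Import Reals Lra Psatz.
From Coquelicot Require Import Coquelicot.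
Open Scope R_scope.


Definition RD01 (f f' : R -> R) : Prop :=
  forall x, in01 x -> forall eps, 0 < eps -> exists delta, 0 < delta /\
    forall h, h <> 0 -> in01 (x + h) -> Rabs h < delta ->
      Rabs ((f (x + h) - f x) / h - f' x) < eps.

Lemma Cdiv_parts (a b c : C) (h : R) : h <> 0 ->
  fst (Cminus (Cdiv (Cminus a b) (RtoC h)) c) = (fst a - fst b) / h - fst c /\
  snd (Cminus (Cdiv (Cminus a b) (RtoC h)) c) = (snd a - snd b) / h - snd c.
Proof.
  intros Hh. destruct a as [a1 a2], b as [b1 b2], c as [c1 c2].
  unfold Cminus, Cdiv, Cplus, Copp, Cmult, Cinv, RtoC; simpl.
  split; field; auto.
Qed.

Lemma C_to_R (f f' : R -> C) : C_deriv_on01 f f' ->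
  RD01 (fun t => fst (f t)) (fun t => fst (f' t)) /\
  RD01 (fun t => snd (f t)) (fun t => snd (f' t)).
Proof.
  intros H. split; intros x Hx eps Heps; destruct (H x Hx eps Heps) as [dl [Hdl Hd]];
  exists dl; split; auto; intros h Hh Hxh Hhd; specialize (Hd h Hh Hxh Hhd);
  destruct (Cdiv_parts (f (x+h)) (f x) (f' x) h Hh) as [E1 E2];
  eapply Rle_lt_trans; try exact Hd;
  (eapply Rle_trans; [| apply Rmax_Cmod]).
  - rewrite <- E1; apply Rmax_l.
  - rewrite <- E2; apply Rmax_r.
Qed.

Definition ext (f : R -> R) (x : R) : R :=
  if Rle_dec x 1 then f x else 2 * f 1 - f (2 - x).

Lemma ext_eq f x : x <= 1 -> ext f x = f x.
Proof. intros H; unfold ext; destruct (Rle_dec x 1); [auto | lra]. Qed.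

Lemma ext_deriv f f' x : RD01 f f' -> in01 x -> is_derive (ext f) x (f' x).
Proof.
  intros H Hx. apply is_derive_Reals. intros eps Heps.
  destruct (H x Hx eps Heps) as [dl [Hdl Hd]].
  destruct Hx as [Hx0 Hx1].
  destruct (Rlt_or_le x 1) as [Hlt | Hge].
  - assert (Hp : 0 < Rmin dl (Rmin x (1 - x))) by (repeat apply Rmin_pos; lra).
    exists (mkposreal _ Hp). simpl. intros h Hh Hhd.
    pose proof (Rmin_l dl (Rmin x (1-x))). pose proof (Rmin_r dl (Rmin x (1-x))).
    pose proof (Rmin_l x (1-x)). pose proof (Rmin_r x (1-x)).
    assert (Rabs h < x) by lra. assert (Rabs h < 1 - x) by lra.
    assert (-x < h < 1 - x) by (split; [apply Rabs_def2 in H4 | apply Rabs_def2 in H5]; lra).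
    rewrite !ext_eq by lra. apply Hd; auto. unfold in01; lra. lra.
  - assert (x = 1) by lra. subst x.
    assert (Hp : 0 < Rmin dl 1) by (apply Rmin_pos; lra).
    exists (mkposreal _ Hp). simpl. intros h Hh Hhd.
    pose proof (Rmin_l dl 1). pose proof (Rmin_r dl 1).
    assert (Rabs h < 1) by lra. apply Rabs_def2 in H2.
    destruct (Rle_or_lt h 0).
    + rewrite !ext_eq by lra. apply Hd; auto. unfold in01; lra. lra.
    + unfold ext at 1. destruct (Rle_dec (1 + h) 1); [lra|].
      rewrite ext_eq by lra.
      replace ((2 * f 1 - f (2 - (1 + h)) - f 1) / h - f' 1)
        with ((f (1 + - h) - f 1) / (- h) - f' 1).
      2:{ replace (2 - (1 + h)) with (1 + - h) by ring. field. lra. }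
      apply Hd. lra. unfold in01; lra. rewrite Rabs_Ropp. lra.
Qed.


Lemma isd_mult f g x df dg : is_derive f x df -> is_derive g x dg ->
  is_derive (fun t => f t * g t) x (df * g x + f x * dg).
Proof. intros. apply (is_derive_mult f g); auto. intros; apply Rmult_comm. Qed.

Lemma isd_plus f g x df dg : is_derive f x df -> is_derive g x dg ->
  is_derive (fun t => f t + g t) x (df + dg).
Proof. intros. apply (is_derive_plus f g); auto. Qed.

Lemma lin4 f1 f2 f3 f4 x d1 d2 d3 d4 c1 c2 c3 c4 :
  is_derive f1 x d1 -> is_derive f2 x d2 -> is_derive f3 x d3 -> is_derive f4 x d4 ->
  is_derive (fun t => c1 * f1 t + c2 * f2 t + c3 * f3 t + c4 * f4 t) x
    (c1 * d1 + c2 * d2 + c3 * d3 + c4 * d4).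
Proof.
  intros. apply isd_plus; [apply isd_plus; [apply isd_plus|]|]; apply is_derive_scal; auto.
Qed.

Definition VD (w : R -> vec2) (x : R) (w' : vec2) : Prop :=
  is_derive (fun t => fst (fst (w t))) x (fst (fst w')) /\
  is_derive (fun t => snd (fst (w t))) x (snd (fst w')) /\
  is_derive (fun t => fst (snd (w t))) x (fst (snd w')) /\
  is_derive (fun t => snd (snd (w t))) x (snd (snd w')).

Definition rip (u v : vec2) : R :=
  fst (fst u) * fst (fst v) + snd (fst u) * snd (fst v) +
  fst (snd u) * fst (snd v) + snd (snd u) * snd (snd v).
Definition nsq (v : vec2) : R := rip v v.

Lemma VD_nsq w x w' : VD w x w' -> is_derive (fun t => nsq (w t)) x (2 * rip (w x) w').
Proof.
  intros [H1 [H2 [H3 H4]]]. unfold nsq, rip.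
  eapply is_derive_ext with (f := fun t =>
     fst (fst (w t)) * fst (fst (w t)) + snd (fst (w t)) * snd (fst (w t)) +
     fst (snd (w t)) * fst (snd (w t)) + snd (snd (w t)) * snd (snd (w t))).
  { intros; reflexivity. }
  replace (2 * _) with
    ((fst (fst w') * fst (fst (w x)) + fst (fst (w x)) * fst (fst w')) +
     (snd (fst w') * snd (fst (w x)) + snd (fst (w x)) * snd (fst w')) +
     (fst (snd w') * fst (snd (w x)) + fst (snd (w x)) * fst (snd w')) +
     (snd (snd w') * snd (snd (w x)) + snd (snd (w x)) * snd (snd w'))) by ring.
  apply isd_plus; [apply isd_plus; [apply isd_plus|]|]; apply isd_mult; auto.
Qed.

Lemma VD_mul M w x w' : VD w x w' -> VD (fun t => mulmv2 M (w t)) x (mulmv2 M w').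
Proof.
  intros [H1 [H2 [H3 H4]]].
  destruct M as [[a1 a2] [b1 b2] [c1 c2] [e1 e2]].
  unfold VD, mulmv2, Cplus, Cmult; simpl.
  split; [|split; [|split]].
  - eapply is_derive_ext with (f := fun t => a1 * fst (fst (w t)) + (- a2) * snd (fst (w t))
       + b1 * fst (snd (w t)) + (- b2) * snd (snd (w t))). { intros t; simpl; ring. }
    replace (_ - _ + _) with (a1 * fst (fst w') + (- a2) * snd (fst w')
       + b1 * fst (snd w') + (- b2) * snd (snd w')) by ring.
    apply lin4; auto.
  - eapply is_derive_ext with (f := fun t => a2 * fst (fst (w t)) + a1 * snd (fst (w t))
       + b2 * fst (snd (w t)) + b1 * snd (snd (w t))). { intros t; simpl; ring. }
    replace (_ + _ + _) with (a2 * fst (fst w') + a1 * snd (fst w')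
       + b2 * fst (snd w') + b1 * snd (snd w')) by ring.
    apply lin4; auto.
  - eapply is_derive_ext with (f := fun t => c1 * fst (fst (w t)) + (- c2) * snd (fst (w t))
       + e1 * fst (snd (w t)) + (- e2) * snd (snd (w t))). { intros t; simpl; ring. }
    replace (_ - _ + _) with (c1 * fst (fst w') + (- c2) * snd (fst w')
       + e1 * fst (snd w') + (- e2) * snd (snd w')) by ring.
    apply lin4; auto.
  - eapply is_derive_ext with (f := fun t => c2 * fst (fst (w t)) + c1 * snd (fst (w t))
       + e2 * fst (snd (w t)) + e1 * snd (snd (w t))). { intros t; simpl; ring. }
    replace (_ + _ + _) with (c2 * fst (fst w') + c1 * snd (fst w')
       + e2 * fst (snd w') + e1 * snd (snd w')) by ring.
    apply lin4; auto.
Qed.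
Definition vadd (u v : vec2) : vec2 := (Cplus (fst u) (fst v), Cplus (snd u) (snd v)).

Ltac crush :=
  repeat match goal with
  | v : vec2 |- _ => destruct v
  | v : (C * C)%type |- _ => destruct v
  | c : C |- _ => destruct c
  | c : (R * R)%type |- _ => destruct c
  | M : mat2 |- _ => destruct M
  end;
  unfold rip, nsq, mulmv2, scalv2, vadd, mat2_add_scal, Cplus, Cmult, RtoC in *; simpl in *.

Lemma AA (A : mat2) (d : R) (v : vec2) : tr2 A = RtoC 0 -> det2 A = RtoC d ->
  mulmv2 A (mulmv2 A v) = scalv2 (-d) v.
Proof.
  destruct A as [a b c e]; unfold tr2, det2; simpl. intros Ht Hd.
  assert (He : e = Copp a).
  { replace e with (Cminus (Cplus a e) a) by ring. rewrite Ht. ring_simplify.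
    unfold RtoC. apply injective_projections; simpl; ring. }
  subst e.
  assert (Hd' : Cplus (Cmult a a) (Cmult b c) = RtoC (-d)).
  { replace (Cplus (Cmult a a) (Cmult b c)) with (Copp (Cminus (Cmult a (Copp a)) (Cmult b c))) by ring.
    rewrite Hd. unfold RtoC, Copp; apply injective_projections; simpl; ring. }
  unfold mulmv2, scalv2; simpl. rewrite <- Hd'.
  apply injective_projections; simpl; ring.
Qed.

Lemma key_id (A B : mat2) (d x b : R) (u u' : vec2) :
  tr2 A = RtoC 0 -> det2 A = RtoC d ->
  scalv2 x u' = mulmv2 (mat2_add_scal A x B) u ->
  x * (2 * rip (mulmv2 A u) (mulmv2 A u') + 2 * b * rip u u') =
  2 * (b - d) * rip u (mulmv2 A u) +
  x * (2 * rip (mulmv2 A u) (mulmv2 A (mulmv2 B u)) + 2 * b * rip u (mulmv2 B u)).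
Proof.
  intros Ht Hd Hode.
  assert (E1 : x * rip (mulmv2 A u) (mulmv2 A u') = rip (mulmv2 A u) (mulmv2 A (scalv2 x u'))).
  { clear Ht Hd Hode. crush. ring. }
  assert (E2 : x * rip u u' = rip u (scalv2 x u')).
  { clear. crush. ring. }
  assert (E3 : mulmv2 (mat2_add_scal A x B) u = vadd (mulmv2 A u) (scalv2 x (mulmv2 B u))).
  { clear. destruct A, B, u. unfold mulmv2, mat2_add_scal, vadd, scalv2; simpl.
    apply injective_projections; simpl; ring. }
  assert (E4 : mulmv2 A (vadd (mulmv2 A u) (scalv2 x (mulmv2 B u))) =
               vadd (mulmv2 A (mulmv2 A u)) (scalv2 x (mulmv2 A (mulmv2 B u)))).
  { clear. destruct A, u. unfold mulmv2, vadd, scalv2; simpl.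
    apply injective_projections; simpl; ring. }
  replace (x * (2 * rip (mulmv2 A u) (mulmv2 A u') + 2 * b * rip u u'))
    with (2 * (x * rip (mulmv2 A u) (mulmv2 A u')) + 2 * b * (x * rip u u')) by ring.
  rewrite E1, E2, Hode, E3, E4, (AA A d u Ht Hd).
  clear. crush. ring.
Qed.

Lemma rip_bound (u v : vec2) : Rabs (2 * rip u v) <= nsq u + nsq v.
Proof.
  destruct u as [[a1 a2] [a3 a4]], v as [[b1 b2] [b3 b4]]. unfold nsq, rip; simpl.
  pose proof (pow2_ge_0 (a1 - b1)). pose proof (pow2_ge_0 (a2 - b2)).
  pose proof (pow2_ge_0 (a3 - b3)). pose proof (pow2_ge_0 (a4 - b4)).
  pose proof (pow2_ge_0 (a1 + b1)). pose proof (pow2_ge_0 (a2 + b2)).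
  pose proof (pow2_ge_0 (a3 + b3)). pose proof (pow2_ge_0 (a4 + b4)).
  apply Rabs_le. split; nra.
Qed.

Definition NM (M : mat2) : R := nsq (m11 M, m12 M) + nsq (m21 M, m22 M).

Lemma row_cs (a1 a2 b1 b2 p1 p2 q1 q2 : R) :
  (a1 * p1 - a2 * p2 + (b1 * q1 - b2 * q2)) * (a1 * p1 - a2 * p2 + (b1 * q1 - b2 * q2)) +
  (a1 * p2 + a2 * p1 + (b1 * q2 + b2 * q1)) * (a1 * p2 + a2 * p1 + (b1 * q2 + b2 * q1))
  <= (a1 * a1 + a2 * a2 + b1 * b1 + b2 * b2) * (p1 * p1 + p2 * p2 + q1 * q1 + q2 * q2).
Proof.
  assert (E : (a1 * a1 + a2 * a2 + b1 * b1 + b2 * b2) * (p1 * p1 + p2 * p2 + q1 * q1 + q2 * q2)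
   - ((a1 * p1 - a2 * p2 + (b1 * q1 - b2 * q2)) * (a1 * p1 - a2 * p2 + (b1 * q1 - b2 * q2)) +
  (a1 * p2 + a2 * p1 + (b1 * q2 + b2 * q1)) * (a1 * p2 + a2 * p1 + (b1 * q2 + b2 * q1)))
   = (a1 * q1 + a2 * q2 - b1 * p1 - b2 * p2)^2 + (a2 * q1 - a1 * q2 - b2 * p1 + b1 * p2)^2) by ring.
  pose proof (pow2_ge_0 (a1 * q1 + a2 * q2 - b1 * p1 - b2 * p2)).
  pose proof (pow2_ge_0 (a2 * q1 - a1 * q2 - b2 * p1 + b1 * p2)). lra.
Qed.

Lemma NM_bound (M : mat2) (v : vec2) : nsq (mulmv2 M v) <= NM M * nsq v.
Proof.
  destruct M as [[a1 a2] [b1 b2] [c1 c2] [e1 e2]], v as [[p1 p2] [q1 q2]].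
  unfold NM, nsq, rip, mulmv2, Cplus, Cmult; simpl.
  pose proof (row_cs a1 a2 b1 b2 p1 p2 q1 q2).
  pose proof (row_cs c1 c2 e1 e2 p1 p2 q1 q2).
  lra.
Qed.

Lemma nsq_ge0 v : 0 <= nsq v.
Proof.
  destruct v as [[a1 a2] [a3 a4]]; unfold nsq, rip; simpl.
  pose proof (Rle_0_sqr a1). pose proof (Rle_0_sqr a2).
  pose proof (Rle_0_sqr a3). pose proof (Rle_0_sqr a4). unfold Rsqr in *. lra.
Qed.

Lemma h_der K x : 0 < x -> is_derive (fun t => exp (- K * t) / t) x (- K * exp (- K * x) / x - exp (- K * x) / (x * x)).
Proof. intros Hx. auto_derive. lra. field. lra. Qed.
Lemma g_der K x : is_derive (fun t => t * exp (K * t)) x (exp (K * x) + K * x * exp (K * x)).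
Proof. auto_derive. auto. ring. Qed.

Lemma mono_dec (F dF : R -> R) :
  (forall x, in01 x -> is_derive F x (dF x)) -> (forall x, in01 x -> dF x <= 0) ->
  forall a b, in01 a -> in01 b -> a <= b -> F b <= F a.
Proof.
  intros HD Hneg a b [Ha0 Ha1] [Hb0 Hb1] Hab.
  destruct (MVT_gen F a b dF) as [c [Hc Heq]].
  - intros x Hx. rewrite Rmin_left in Hx by lra. rewrite Rmax_right in Hx by lra.
    apply HD. split; lra.
  - intros x Hx. rewrite Rmin_left in Hx by lra. rewrite Rmax_right in Hx by lra.
    apply continuity_pt_filterlim. apply (@ex_derive_continuous R_AbsRing R_NormedModule F x).
    exists (dF x). apply HD. split; lra.
  - rewrite Rmin_left in Hc by lra. rewrite Rmax_right in Hc by lra.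
    assert (dF c <= 0) by (apply Hneg; split; lra).
    assert (dF c * (b - a) <= 0). { apply Rmult_le_0_r; lra. }
    lra.
Qed.

Lemma mono_inc (F dF : R -> R) :
  (forall x, in01 x -> is_derive F x (dF x)) -> (forall x, in01 x -> 0 <= dF x) ->
  forall a b, in01 a -> in01 b -> a <= b -> F a <= F b.
Proof.
  intros HD Hpos a b Ha Hb Hab.
  assert (H := mono_dec (fun t => - F t) (fun t => - dF t)).
  assert (- F b <= - F a); [|lra].
  apply H; auto.
  - intros x Hx. apply (is_derive_opp F). auto.
  - intros x Hx. specialize (Hpos x Hx). lra.
Qed.

Lemma ineq_core (a n T NA NB nb m r1 r2 : R) :
  0 <= a -> 0 <= n -> 0 < T -> 0 <= NA -> 0 <= NB -> 0 <= nb ->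
  m <= NA * nb -> nb <= NB * n -> Rabs r1 <= a + m -> Rabs r2 <= n + nb ->
  Rabs (r1 + T * r2) <= (2 + NB + NA * NB / T) * (a + T * n).
Proof.
  intros. eapply Rle_trans. apply Rabs_triang.
  rewrite Rabs_mult, (Rabs_right T) by lra.
  assert (NA * nb <= NA * (NB * n)) by (apply Rmult_le_compat_l; auto).
  assert (T * Rabs r2 <= T * (n + nb)) by (apply Rmult_le_compat_l; lra).
  assert (T * nb <= T * (NB * n)) by (apply Rmult_le_compat_l; lra).
  assert (E : (2 + NB + NA * NB / T) * (a + T * n) =
     2 * a + 2 * T * n + NB * a + NB * T * n + NA * NB * a / T + NA * NB * n) by (field; lra).
  rewrite E.
  assert (0 <= NB * a) by (apply Rmult_le_pos; auto).
  assert (0 <= NA * NB * a / T).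
  { unfold Rdiv. apply Rmult_le_pos. apply Rmult_le_pos. apply Rmult_le_pos; auto. auto.
    left; apply Rinv_0_lt_compat; auto. }
  assert (NB * T * n = T * (NB * n)) by ring.
  assert (NA * NB * n = NA * (NB * n)) by ring.
  assert (0 <= T * n) by (apply Rmult_le_pos; lra).
  lra.
Qed.

Lemma rip_scal_l (u v : vec2) (t : R) : rip v (scalv2 t u) = t * rip u v.
Proof. destruct u as [[a1 a2] [a3 a4]], v as [[b1 b2] [b3 b4]]. unfold rip, scalv2, Cmult, RtoC; simpl. ring. Qed.
Lemma nsq_scal (u : vec2) (t : R) : nsq (scalv2 t u) = t * t * nsq u.
Proof. destruct u as [[a1 a2] [a3 a4]]. unfold nsq, rip, scalv2, Cmult, RtoC; simpl. ring. Qed.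

Lemma main_ineq (A B : mat2) (d x c0 : R) (u u' : vec2) :
  tr2 A = RtoC 0 -> det2 A = RtoC d -> 0 < c0 -> c0 * c0 - d = c0 -> 0 < x ->
  scalv2 x u' = mulmv2 (mat2_add_scal A x B) u ->
  let Q := nsq (mulmv2 A u) + c0 * c0 * nsq u in
  let Qd := 2 * rip (mulmv2 A u) (mulmv2 A u') + c0 * c0 * (2 * rip u u') in
  let K := 2 + NM B + NM A * NM B / (c0 * c0) in
  x * Qd <= Q + K * x * Q /\ - (Q + K * x * Q) <= x * Qd.
Proof.
  intros Ht Hd Hc Hcd Hx Hode Q Qd K.
  assert (HK := key_id A B d x (c0 * c0) u u' Ht Hd Hode).
  assert (E1 : x * Qd = 2 * c0 * rip u (mulmv2 A u) +
     x * (2 * rip (mulmv2 A u) (mulmv2 A (mulmv2 B u)) + c0 * c0 * (2 * rip u (mulmv2 B u)))).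
  { unfold Qd.
    replace (x * (2 * rip (mulmv2 A u) (mulmv2 A u') + c0 * c0 * (2 * rip u u')))
      with (x * (2 * rip (mulmv2 A u) (mulmv2 A u') + 2 * (c0 * c0) * rip u u')) by ring.
    rewrite HK, Hcd. ring. }
  assert (B1 : Rabs (2 * c0 * rip u (mulmv2 A u)) <= Q).
  { pose proof (rip_bound (mulmv2 A u) (scalv2 c0 u)) as H.
    rewrite rip_scal_l, nsq_scal in H. unfold Q.
    replace (2 * c0 * rip u (mulmv2 A u)) with (2 * (c0 * rip u (mulmv2 A u))) by ring. auto. }
  assert (B2 : Rabs (2 * rip (mulmv2 A u) (mulmv2 A (mulmv2 B u)) + c0 * c0 * (2 * rip u (mulmv2 B u)))
     <= K * Q).
  { unfold K, Q. apply ineq_core with (nb := nsq (mulmv2 B u)) (m := nsq (mulmv2 A (mulmv2 B u))).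
    - apply nsq_ge0. - apply nsq_ge0. - nra.
    - unfold NM; pose proof (nsq_ge0 (m11 A, m12 A)); pose proof (nsq_ge0 (m21 A, m22 A)); lra.
    - unfold NM; pose proof (nsq_ge0 (m11 B, m12 B)); pose proof (nsq_ge0 (m21 B, m22 B)); lra.
    - apply nsq_ge0. - apply NM_bound. - apply NM_bound.
    - apply rip_bound. - apply rip_bound. }
  assert (HQ : 0 <= Q).
  { unfold Q. pose proof (nsq_ge0 (mulmv2 A u)). pose proof (nsq_ge0 u). nra. }
  set (E := 2 * rip (mulmv2 A u) (mulmv2 A (mulmv2 B u)) + c0 * c0 * (2 * rip u (mulmv2 B u))) in *.
  set (M := 2 * c0 * rip u (mulmv2 A u)) in *.
  rewrite E1. apply Rabs_le_between in B1. apply Rabs_le_between in B2.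
  assert (x * E <= x * (K * Q)) by (apply Rmult_le_compat_l; lra).
  assert (x * (- (K * Q)) <= x * E) by (apply Rmult_le_compat_l; lra).
  split; nra.
Qed.

Lemma nsq_pos (v : vec2) : v <> (RtoC 0, RtoC 0) -> 0 < nsq v.
Proof.
  intros Hv. destruct v as [[a b] [c e]]. unfold nsq, rip; simpl.
  apply Rnot_le_lt; intro Hle; apply Hv.
  pose proof (Rle_0_sqr a). pose proof (Rle_0_sqr b).
  pose proof (Rle_0_sqr c). pose proof (Rle_0_sqr e). unfold Rsqr in *.
  assert (a * a = 0) by lra. assert (b * b = 0) by lra.
  assert (c * c = 0) by lra. assert (e * e = 0) by lra.
  apply Rmult_integral in H3. apply Rmult_integral in H4.
  apply Rmult_integral in H5. apply Rmult_integral in H6.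
  assert (a = 0) by tauto. assert (b = 0) by tauto.
  assert (c = 0) by tauto. assert (e = 0) by tauto. subst. reflexivity.
Qed.

Lemma vnorm2_nsq v : vnorm2 v = sqrt (nsq v).
Proof.
  unfold vnorm2. rewrite !Cmod2_alt. unfold Re, Im, nsq, rip. f_equal. simpl. ring.
Qed.

Lemma exp_inv K x : exp (- K * x) * exp (K * x) = 1.
Proof. rewrite <- exp_plus. replace (- K * x + K * x) with 0 by ring. apply exp_0. Qed.

Lemma exp_ge1 z : 0 <= z -> 1 <= exp z.
Proof. intros H. rewrite <- exp_0. destruct H as [H|H]. left; apply exp_increasing; auto. subst; lra. Qed.

Lemma exp_mono a b : a <= b -> exp a <= exp b.
Proof. intros [H|H]. left; apply exp_increasing; auto. subst; lra. Qed.

Theorem mainTheorem3 (A B : mat2) (d : R) (y y' : R -> vec2) :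
  tr2 A = RtoC 0 ->
  det2 A = RtoC d -> -(1/4) <= d ->
  deriv_on01 y y' ->
  (forall x, in01 x -> scalv2 x (y' x) = mulmv2 (mat2_add_scal A x B) (y x)) ->
  (exists x0, in01 x0 /\ y x0 <> (RtoC 0, RtoC 0)) ->
  exists eps, 0 < eps /\ forall x, in01 x -> eps * sqrt x <= vnorm2 (y x).
Proof.
  intros Htr Hdet Hd14 [Hy1 Hy2] Hode [x0 [Hx0 Hy0]].
  destruct (C_to_R _ _ Hy1) as [R1 R2]. destruct (C_to_R _ _ Hy2) as [R3 R4].
  set (ye := fun t => ((ext (fun t => fst (fst (y t))) t, ext (fun t => snd (fst (y t))) t),
                       (ext (fun t => fst (snd (y t))) t, ext (fun t => snd (snd (y t))) t))).
  assert (Hye : forall t, t <= 1 -> ye t = y t).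
  { intros t Ht. unfold ye. rewrite !ext_eq by auto. destruct (y t) as [[? ?] [? ?]]. reflexivity. }
  assert (HVD : forall t, in01 t -> VD ye t (y' t)).
  { intros t Ht. unfold VD, ye; simpl.
    split; [|split; [|split]].
    - apply (ext_deriv _ _ t R1 Ht).
    - apply (ext_deriv _ _ t R2 Ht).
    - apply (ext_deriv _ _ t R3 Ht).
    - apply (ext_deriv _ _ t R4 Ht). }
  set (s := sqrt (1 + 4 * d)).
  assert (Hs0 : 0 <= s) by apply sqrt_pos.
  assert (Hss : s * s = 1 + 4 * d) by (apply sqrt_sqrt; lra).
  set (c0 := (1 + s) / 2).
  assert (Hc0 : 0 < c0) by (unfold c0; lra).
  assert (Hcd : c0 * c0 - d = c0) by (unfold c0; nra).
  set (T := c0 * c0).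
  assert (HT : 0 < T) by (unfold T; nra).
  assert (HNA : 0 <= NM A).
  { unfold NM; pose proof (nsq_ge0 (m11 A, m12 A)); pose proof (nsq_ge0 (m21 A, m22 A)); lra. }
  assert (HNB : 0 <= NM B).
  { unfold NM; pose proof (nsq_ge0 (m11 B, m12 B)); pose proof (nsq_ge0 (m21 B, m22 B)); lra. }
  set (K := 2 + NM B + NM A * NM B / (c0 * c0)).
  assert (HK : 0 <= K).
  { unfold K. assert (0 <= NM A * NM B / (c0 * c0)).
    { unfold Rdiv. apply Rmult_le_pos. apply Rmult_le_pos; auto. left; apply Rinv_0_lt_compat; nra. }
    lra. }
  set (Qe := fun t => nsq (mulmv2 A (ye t)) + T * nsq (ye t)).
  set (Qd := fun t => 2 * rip (mulmv2 A (y t)) (mulmv2 A (y' t)) + T * (2 * rip (y t) (y' t))).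
  assert (HQd : forall t, in01 t -> is_derive Qe t (Qd t)).
  { intros t Ht. unfold Qe, Qd. rewrite <- (Hye t) by (destruct Ht; auto).
    apply isd_plus.
    - apply VD_nsq. apply VD_mul. auto.
    - apply is_derive_scal. apply VD_nsq. auto. }
  assert (Hineq : forall t, in01 t -> t * Qd t <= Qe t + K * t * Qe t /\ - (Qe t + K * t * Qe t) <= t * Qd t).
  { intros t Ht. unfold Qe, Qd, T, K. rewrite (Hye t) by (destruct Ht; auto).
    apply (main_ineq A B d t c0 (y t) (y' t)); auto. destruct Ht; auto. }
  assert (HQe0 : forall t, 0 <= Qe t).
  { intros t. unfold Qe. pose proof (nsq_ge0 (mulmv2 A (ye t))). pose proof (nsq_ge0 (ye t)). nra. }
  set (F := fun t => Qe t * (exp (- K * t) / t)).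
  set (dF := fun t => Qd t * (exp (- K * t) / t) + Qe t * (- K * exp (- K * t) / t - exp (- K * t) / (t * t))).
  set (G := fun t => Qe t * (t * exp (K * t))).
  set (dG := fun t => Qd t * (t * exp (K * t)) + Qe t * (exp (K * t) + K * t * exp (K * t))).
  assert (HF : forall a b, in01 a -> in01 b -> a <= b -> F b <= F a).
  { apply (mono_dec F dF).
    - intros t Ht. unfold F, dF. apply (isd_mult Qe (fun u => exp (- K * u) / u)). auto. apply h_der. destruct Ht; auto.
    - intros t Ht. destruct (Hineq t Ht) as [H1 H2]. destruct Ht as [Ht0 Ht1].
      unfold dF.
      replace (Qd t * (exp (- K * t) / t) + Qe t * (- K * exp (- K * t) / t - exp (- K * t) / (t * t)))
        with (exp (- K * t) / (t * t) * (t * Qd t - Qe t - K * t * Qe t)) by (field; lra).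
      assert (0 < exp (- K * t) / (t * t)).
      { apply Rdiv_lt_0_compat. apply exp_pos. nra. }
      assert (t * Qd t - Qe t - K * t * Qe t <= 0) by lra.
      nra. }
  assert (HG : forall a b, in01 a -> in01 b -> a <= b -> G a <= G b).
  { apply (mono_inc G dG).
    - intros t Ht. unfold G, dG. apply (isd_mult Qe (fun u => u * exp (K * u))). auto. apply g_der.
    - intros t Ht. destruct (Hineq t Ht) as [H1 H2].
      unfold dG.
      replace (Qd t * (t * exp (K * t)) + Qe t * (exp (K * t) + K * t * exp (K * t)))
        with (exp (K * t) * (t * Qd t + Qe t + K * t * Qe t)) by ring.
      pose proof (exp_pos (K * t)).
      assert (0 <= t * Qd t + Qe t + K * t * Qe t) by lra.
      nra. }
  set (Q0 := Qe x0).
  assert (HQ0 : 0 < Q0).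
  { unfold Q0, Qe. rewrite (Hye x0) by (destruct Hx0; auto).
    pose proof (nsq_ge0 (mulmv2 A (y x0))). pose proof (nsq_pos _ Hy0). nra. }
  set (c := Q0 * x0 * exp (- K)).
  assert (Hc : 0 < c).
  { unfold c. apply Rmult_lt_0_compat. apply Rmult_lt_0_compat; auto. destruct Hx0; auto. apply exp_pos. }
  assert (Hlow : forall x, in01 x -> c * x <= Qe x).
  { intros x Hx. pose proof Hx as [Hx1 Hx2]. pose proof Hx0 as [Hx01 Hx02].
    assert (HeK : exp (- K) <= exp (- K * x)) by (apply exp_mono; nra).
    assert (HeK0 : exp (- K) <= exp (- K * x0)) by (apply exp_mono; nra).
    pose proof (exp_pos (- K)).
    destruct (Rle_or_lt x x0) as [Hle | Hlt].
    - specialize (HF x x0 Hx Hx0 Hle).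
      assert (E : Qe x = F x * (x * exp (K * x))).
      { unfold F. replace (Qe x * (exp (- K * x) / x) * (x * exp (K * x)))
          with (Qe x * (exp (- K * x) * exp (K * x)) * (x / x)) by (field; lra).
        rewrite exp_inv. field; lra. }
      assert (E0 : F x0 = Q0 * exp (- K * x0) / x0) by (unfold F, Q0; field; lra).
      assert (H1 : c <= F x0).
      { rewrite E0. unfold c.
        assert (x0 * x0 <= 1) by nra.
        apply Rmult_le_reg_r with x0; auto.
        replace (Q0 * exp (- K * x0) / x0 * x0) with (Q0 * exp (- K * x0)) by (field; lra).
        replace (Q0 * x0 * exp (- K) * x0) with (Q0 * exp (- K) * (x0 * x0)) by ring.
        assert (Q0 * exp (- K) <= Q0 * exp (- K * x0)) by (apply Rmult_le_compat_l; lra).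
        assert (0 <= Q0 * exp (- K)) by (apply Rmult_le_pos; lra).
        nra. }
      assert (H2 : 1 <= exp (K * x)) by (apply exp_ge1; nra).
      rewrite E.
      assert (c * x <= F x * x) by nra.
      assert (0 <= F x) by lra.
      assert (F x * x <= F x * (x * exp (K * x))).
      { apply Rmult_le_compat_l; auto. nra. }
      lra.
    - assert (Hle : x0 <= x) by lra.
      specialize (HG x0 x Hx0 Hx Hle).
      assert (E : Qe x = G x * (exp (- K * x) / x)).
      { unfold G. replace (Qe x * (x * exp (K * x)) * (exp (- K * x) / x))
          with (Qe x * (exp (- K * x) * exp (K * x)) * (x / x)) by (field; lra).
        rewrite exp_inv. field; lra. }
      assert (H1 : Q0 * x0 <= G x0).
      { unfold G; fold Q0.
        assert (1 <= exp (K * x0)) by (apply exp_ge1; nra).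
        assert (0 <= Q0 * x0) by nra.
        nra. }
      assert (H2 : exp (- K) * x <= exp (- K * x) / x).
      { apply Rmult_le_reg_r with x; auto.
        replace (exp (- K * x) / x * x) with (exp (- K * x)) by (field; lra).
        assert (x * x <= 1) by nra. nra. }
      rewrite E. unfold c.
      assert (0 <= exp (- K) * x) by nra.
      assert (0 <= Q0 * x0) by nra.
      assert (Q0 * x0 * (exp (- K) * x) <= G x * (exp (- K) * x)) by (apply Rmult_le_compat_r; lra).
      assert (0 <= G x) by lra.
      assert (G x * (exp (- K) * x) <= G x * (exp (- K * x) / x)) by (apply Rmult_le_compat_l; lra).
      nra. }
  exists (sqrt (c / (NM A + T))). split.
  { apply sqrt_lt_R0. apply Rdiv_lt_0_compat; lra. }
  intros x Hx. pose proof Hx as [Hx1 Hx2].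
  rewrite vnorm2_nsq.
  rewrite <- sqrt_mult_alt by (left; apply Rdiv_lt_0_compat; lra).
  apply sqrt_le_1_alt.
  specialize (Hlow x Hx).
  assert (HQup : Qe x <= (NM A + T) * nsq (y x)).
  { unfold Qe. rewrite (Hye x) by auto. pose proof (NM_bound A (y x)). lra. }
  apply Rmult_le_reg_l with (NM A + T). lra.
  replace ((NM A + T) * (c / (NM A + T) * x)) with (c * x) by (field; lra).
  lra.
Qed.
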